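(* Let $\mathscr{A}$ be a unital Banach algebra, $\mathscr{B},\mathscr{C}$ unital Banach algebras, and $\varphi:\mathscr{A}\to\mathscr{B}$, $\psi:\mathscr{A}\to\mathscr{C}$ algebra homomorphisms. The following are equivalent: (i) every bounded Jordan $(\varphi,\psi)$-derivation from $\mathscr{A}$ into any unital Banach $\mathscr{B}$-$\mathscr{C}$-bimodule is a $(\varphi,\psi)$-derivation; (ii) every bounded trilinear form $V:\mathscr{A}\times\mathscr{C}\times\mathscr{B}\to\mathbb{C}$ satisfying $$V(a^{2},c,b)=V(a,\psi(a)c,b)+V(a,c,b\varphi(a))\quad(a\in\mathscr{A},b\in\mathscr{B},c\in\mathscr{C})$$ also satisfies $$V(ad,c,b)=V(a,\psi(d)c,b)+V(d,c,b\varphi(a))\quad(a,d\in\mathscr{A},b\in\mathscr{B},c\in\mathscr{C}).$$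
   Context: A Banach $\mathscr{B}$-$\mathscr{C}$-bimodule is a Banach space $X$ that is a left Banach $\mathscr{B}$-module and a right Banach $\mathscr{C}$-module with commuting actions and $\|b\cdot x\cdot c\|\le\|b\|\|x\|\|c\|$; it is unital if the units of $\mathscr{B},\mathscr{C}$ act as the identity. A linear map $\delta:\mathscr{A}\to X$ is a Jordan $(\varphi,\psi)$-derivation if $\delta(a^{2})=\varphi(a)\cdot\delta(a)+\delta(a)\cdot\psi(a)$ for all $a$, and a $(\varphi,\psi)$-derivation if $\delta(ab)=\delta(a)\cdot\psi(b)+\varphi(a)\cdot\delta(b)$ for all $a,b$. *)

(* Defs.v *)
From mathcomp Require Import all_boot all_order all_algebra.
From mathcomp Require Import complex.
From mathcomp Require Import all_classical all_reals all_analysis.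
Import numFieldNormedType.Exports.
Import Order.TTheory GRing.Theory Num.Theory.
Set Implicit Arguments. Unset Strict Implicit. Unset Printing Implicit Defensive.
Local Open Scope ring_scope.

Section BanachDefs.
Variable K : numFieldType.

Record unital_banach_algebra (A : completeNormedModType K)
    (mul : A -> A -> A) (one : A) : Prop := {
  ba_mulA : forall a b c, mul a (mul b c) = mul (mul a b) c;
  ba_mul1l : forall a, mul one a = a;
  ba_mul1r : forall a, mul a one = a;
  ba_mulDl : forall a b c, mul (a + b) c = mul a c + mul b c;
  ba_mulDr : forall a b c, mul a (b + c) = mul a b + mul a c;
  ba_mulZl : forall (k : K) a b, mul (k *: a) b = k *: mul a b;
  ba_mulZr : forall (k : K) a b, mul a (k *: b) = k *: mul a b;
  ba_norm_mul : forall a b, `|mul a b| <= `|a| * `|b|;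
  ba_norm_one : `|one| = 1 }.

Definition is_linear (U V : lmodType K) (f : U -> V) : Prop :=
  (forall u v, f (u + v) = f u + f v) /\ (forall (k : K) u, f (k *: u) = k *: f u).

Definition is_alg_hom (A B : lmodType K) (mulA : A -> A -> A) (mulB : B -> B -> B)
    (f : A -> B) : Prop :=
  is_linear f /\ (forall a b, f (mulA a b) = mulB (f a) (f b)).

Definition is_bounded (U V : normedModType K) (f : U -> V) : Prop :=
  exists M : K, forall u, `|f u| <= M * `|u|.

Record unital_banach_bimodule (B C X : completeNormedModType K)
    (mulB : B -> B -> B) (oneB : B) (mulC : C -> C -> C) (oneC : C)
    (lact : B -> X -> X) (ract : X -> C -> X) : Prop := {
  bm_lactDl : forall b1 b2 x, lact (b1 + b2) x = lact b1 x + lact b2 x;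
  bm_lactDr : forall b x y, lact b (x + y) = lact b x + lact b y;
  bm_lactZl : forall (k : K) b x, lact (k *: b) x = k *: lact b x;
  bm_lactZr : forall (k : K) b x, lact b (k *: x) = k *: lact b x;
  bm_ractDl : forall x y c, ract (x + y) c = ract x c + ract y c;
  bm_ractDr : forall x c1 c2, ract x (c1 + c2) = ract x c1 + ract x c2;
  bm_ractZl : forall (k : K) x c, ract (k *: x) c = k *: ract x c;
  bm_ractZr : forall (k : K) x c, ract x (k *: c) = k *: ract x c;
  bm_lactA : forall b1 b2 x, lact (mulB b1 b2) x = lact b1 (lact b2 x);
  bm_ractA : forall x c1 c2, ract x (mulC c1 c2) = ract (ract x c1) c2;
  bm_comm : forall b x c, ract (lact b x) c = lact b (ract x c);
  bm_norm : forall b x c, `|ract (lact b x) c| <= `|b| * `|x| * `|c|;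
  bm_lact1 : forall x, lact oneB x = x;
  bm_ract1 : forall x, ract x oneC = x }.

Definition is_jordan_der (A B C X : Type) (mulA : A -> A -> A)
    (lact : B -> X -> X) (ract : X -> C -> X) (addX : X -> X -> X)
    (phi : A -> B) (psi : A -> C) (d : A -> X) : Prop :=
  forall a, d (mulA a a) = addX (lact (phi a) (d a)) (ract (d a) (psi a)).

Definition is_der (A B C X : Type) (mulA : A -> A -> A)
    (lact : B -> X -> X) (ract : X -> C -> X) (addX : X -> X -> X)
    (phi : A -> B) (psi : A -> C) (d : A -> X) : Prop :=
  forall a b, d (mulA a b) = addX (ract (d a) (psi b)) (lact (phi a) (d b)).

Definition is_bounded_trilinear (A C B : normedModType K) (V : A -> C -> B -> K) : Prop :=
  (forall c b, is_linear (fun a : A => (V a c b : K^o)))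
  /\ (forall a b, is_linear (fun c : C => (V a c b : K^o)))
  /\ (forall a c, is_linear (fun b : B => (V a c b : K^o)))
  /\ (exists M : K, forall a c b, `|V a c b| <= M * `|a| * `|c| * `|b|).

End BanachDefs.

(* Main.v *)
Require Import Defs.
From HB Require Import structures.
From mathcomp Require Import all_boot all_order all_algebra.
From mathcomp Require Import complex.
From mathcomp Require Import all_classical all_reals all_analysis.
Import numFieldNormedType.Exports.
Import Order.TTheory GRing.Theory Num.Theory.
Set Implicit Arguments. Unset Strict Implicit. Unset Printing Implicit Defensive.
Local Open Scope ring_scope.
Local Open Scope complex_scope.
Section Cplx.
Variable R : realType.
Local Notation K := R[i].

Lemma nonneg_realC (z : K) : 0 <= z -> z = (complex.Re z)%:C.
Proof. by move=> h; have := ger0_Im h; case: z h => a b /= _ ->. Qed.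

Definition nV (V : normedModType K) (v : V) : R := complex.Re `|v|.

Lemma normE (V : normedModType K) (v : V) : `|v| = (nV v)%:C.
Proof. exact/nonneg_realC/normr_ge0. Qed.

Lemma nV_ge0 (V : normedModType K) (v : V) : 0 <= nV v.
Proof. by rewrite -ler0c -normE. Qed.

Lemma nV_D (V : normedModType K) (u v : V) : nV (u + v) <= nV u + nV v.
Proof. by rewrite -lecR rmorphD /= -!normE ler_normD. Qed.

Lemma nKE (k : K) : `|k| = (nV (k : K^o))%:C.
Proof. by rewrite -normE. Qed.

Lemma nV_Z (V : normedModType K) (k : K) (v : V) : nV (k *: v) = nV (k : K^o) * nV v.
Proof. by apply: complexI; rewrite rmorphM /= -!normE normrZ. Qed.

Lemma nV_N (V : normedModType K) (v : V) : nV (- v) = nV v.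
Proof. by rewrite /nV normrN. Qed.

Lemma nV_0 (V : normedModType K) : nV (0 : V) = 0.
Proof. by rewrite /nV normr0. Qed.

Lemma nV_eq0 (V : normedModType K) (v : V) : nV v = 0 -> v = 0.
Proof. by move=> h; apply/normr0_eq0; rewrite normE h. Qed.

Lemma nV_B (V : normedModType K) (u v : V) : nV (u - v) = nV (v - u).
Proof. by rewrite /nV distrC. Qed.

Lemma nK_real (r : R) : nV (r%:C : K^o) = `|r|.
Proof.
by rewrite /nV /= expr0n /= addr0 sqrtr_sqr.
Qed.

Lemma nK_i : nV ('i : K^o) = 1.
Proof. by rewrite /nV /= expr0n /= add0r expr1n sqrtr1. Qed.

Lemma normle (V U : normedModType K) (v : V) (u : U) (M : R) :
  (`|v| <= M%:C * `|u|) = (nV v <= M * nV u).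
Proof. by rewrite !normE -rmorphM lecR. Qed.

Lemma nV_M (a b : K) : nV ((a * b : K) : K^o) = nV (a : K^o) * nV (b : K^o).
Proof. exact: (nV_Z (V:=K^o) a b). Qed.

End Cplx.
From mathcomp Require Import lra ring.
Section HahnBanach.
Variable R : realType.
Local Notation K := R[i].
Variable X : normedModType K.
Variable x0 : X.
Hypothesis hx0 : x0 != 0.

Local Notation p := (@nV R X).
Definition sc (t : R) (u : X) : X := t%:C *: u.

Lemma p_sc t u : p (sc t u) = `|t| * p u.
Proof. by rewrite /sc nV_Z nK_real. Qed.

Lemma sc_add t s u : sc (t + s) u = sc t u + sc s u.
Proof. by rewrite /sc rmorphD scalerDl. Qed.
Lemma sc_addr t u v : sc t (u + v) = sc t u + sc t v.
Proof. by rewrite /sc scalerDr. Qed.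
Lemma sc_mul t s u : sc t (sc s u) = sc (t * s) u.
Proof. by rewrite /sc scalerA rmorphM. Qed.
Lemma sc1 u : sc 1 u = u.
Proof. by rewrite /sc rmorph1 scale1r. Qed.
Lemma sc0 u : sc 0 u = 0.
Proof. by rewrite /sc rmorph0 scale0r. Qed.
Lemma scN t u : sc (- t) u = - sc t u.
Proof. by rewrite /sc rmorphN scaleNr. Qed.
Lemma scN1 u : sc (-1) u = - u.
Proof. by rewrite /sc rmorphN1 scaleN1r. Qed.

Definition good (G : set (X * R)) : Prop :=
  [/\ (forall u r s, G (u,r) -> G (u,s) -> r = s),
      (forall u r v s, G (u,r) -> G (v,s) -> G (u+v, r+s)),
      (forall u r t, G (u,r) -> G (sc t u, t*r)),
      (forall u r, G (u,r) -> r <= p u)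
    & ((exists z, G z) -> G (x0, p x0))].

Lemma good_chain (F : set (set (X * R))) :
  (F `<=` good)%classic -> total_on F subset -> good (\bigcup_(A in F) A)%classic.
Proof.
move=> Fg Ftot; split.
- move=> u r s [A FA Ar] [B FB Bs]; case: (Ftot A B FA FB) => [AB|BA].
  + by case: (Fg B FB) => h _ _ _ _; apply: h (AB _ Ar) Bs.
  + by case: (Fg A FA) => h _ _ _ _; apply: h Ar (BA _ Bs).
- move=> u r v s [A FA Ar] [B FB Bs]; case: (Ftot A B FA FB) => [AB|BA].
  + by case: (Fg B FB) => _ h _ _ _; exists B => //; apply: h (AB _ Ar) Bs.
  + by case: (Fg A FA) => _ h _ _ _; exists A => //; apply: h Ar (BA _ Bs).
- move=> u r t [A FA Ar]; case: (Fg A FA) => _ _ h _ _; exists A => //.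
  exact: h.
- move=> u r [A FA Ar]; case: (Fg A FA) => _ _ _ h _; exact: h.
- move=> [z [A FA Az]]; case: (Fg A FA) => _ _ _ _ h; exists A => //.
  by apply: h; exists z.
Qed.

Definition G0 : set (X * R) := [set z | exists t, z = (sc t x0, t * p x0)].

Lemma sc_inj_x0 t t' : sc t x0 = sc t' x0 -> t = t'.
Proof.
move=> /eqP; rewrite -subr_eq0 /sc -scalerBl scaler_eq0 (negbTE hx0) orbF.
by rewrite -rmorphB /= => /eqP [] /eqP; rewrite subr_eq0 => /eqP.
Qed.

Lemma good_G0 : good G0.
Proof.
split.
- move=> u r s [t [-> ->]] [t' [e ->]]; by rewrite (sc_inj_x0 e).
- move=> u r v s [t [-> ->]] [t' [-> ->]]; exists (t + t').
  by rewrite sc_add mulrDl.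
- move=> u r t [t' [-> ->]]; exists (t * t'); by rewrite sc_mul mulrA.
- move=> u r [t [-> ->]]; rewrite p_sc; apply: ler_wpM2r; first exact: nV_ge0.
  exact: ler_norm.
- by move=> _; exists 1; rewrite sc1 mul1r.
Qed.


Section Ext.
Variable A : set (X * R).
Hypothesis gA : good A.
Hypothesis neA : exists z, A z.
Variable y : X.
Hypothesis ny : forall r, ~ A (y, r).

Let G1 := let: And5 h _ _ _ _ := gA in h.
Let G2 := let: And5 _ h _ _ _ := gA in h.
Let G3 := let: And5 _ _ h _ _ := gA in h.
Let G4 := let: And5 _ _ _ h _ := gA in h.
Let G5 := let: And5 _ _ _ _ h := gA in h.

Lemma A00 : A (0, 0).
Proof. by have := G3 0 (G5 neA); rewrite sc0 mul0r. Qed.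

Lemma A_ub u r v s : A (u, r) -> A (v, s) -> r - p (u - y) <= p (v + y) - s.
Proof.
move=> Au Av; have h1 := G4 (G2 Au Av).
have h2 := nV_D (u - y) (v + y).
have e : u - y + (v + y) = u + v by rewrite addrACA addNr addr0.
rewrite e in h2; lra.
Qed.

Let S : set R := [set w | exists u r, A (u, r) /\ w = r - p (u - y)].

Lemma S_has_sup : has_sup S.
Proof.
split; first by exists (0 - p (0 - y)); exists 0, 0; split => //; exact: A00.
exists (p (0 + y) - 0) => w [u [r [Au ->]]]; exact: A_ub Au A00.
Qed.

Let alpha := sup S.

Lemma alpha_lo u r : A (u, r) -> r - p (u - y) <= alpha.
Proof. by move=> Au; apply: sup_upper_bound S_has_sup _ _; exists u, r. Qed.

Lemma alpha_hi v s : A (v, s) -> alpha <= p (v + y) - s.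
Proof.
move=> Av; apply: ge_sup; first by case: S_has_sup.
by move=> w [u [r [Au ->]]]; exact: A_ub Au Av.
Qed.

Definition A' : set (X * R) :=
  [set z | exists u r t, A (u, r) /\ z = (u + sc t y, r + t * alpha)].

Lemma dom_t u r u' r' t t' : A (u, r) -> A (u', r') ->
  u + sc t y = u' + sc t' y -> t = t'.
Proof.
move=> Au Au' e; apply/eqP; apply/negP => /negP ntt.
have d : sc (t - t') y = u' - u.
  by rewrite sc_add scN -[sc t y](addKr u) e addrA addrK addrC.
have Ad : A (u' - u, r' - r).
  have := G2 Au' (G3 (-1) Au); by rewrite scN1 mulN1r.
have := G3 (t - t')^-1 Ad; rewrite -d sc_mul mulVf ?subr_eq0 // sc1.
exact: ny.
Qed.

Lemma good_A' : good A'.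
Proof.
split.
- move=> w a b [u [r [t [Au [e1 e2]]]]] [u' [r' [t' [Au' [e1' e2']]]]].
  have et : t = t' by apply: dom_t Au Au' _; rewrite -e1 -e1'.
  subst t'; have eu : u = u' by apply: (addIr (sc t y)); rewrite -e1 -e1'.
  subst u'; by rewrite e2 e2' (G1 Au Au').
- move=> w a v b [u [r [t [Au [-> ->]]]]] [u' [r' [t' [Au' [-> ->]]]]].
  exists (u + u'), (r + r'), (t + t'); split; first exact: G2.
  congr (_, _); last by rewrite mulrDl; lra.
  by rewrite sc_add addrACA.
- move=> w a c [u [r [t [Au [-> ->]]]]].
  exists (sc c u), (c * r), (c * t); split; first exact: G3.
  by rewrite sc_addr sc_mul mulrDr mulrA.
- move=> w a [u [r [t [Au [-> ->]]]]].
  have [t0|tn0] := eqVneq t 0.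
    by rewrite t0 sc0 addr0 mul0r addr0; exact: G4.
  have Aw := G3 t^-1 Au.
  have ew : u + sc t y = sc t (sc t^-1 u + y).
    by rewrite sc_addr sc_mul mulfV // sc1.
  rewrite ew p_sc.
  have tt : t * t^-1 = 1 by rewrite mulfV.
  have pge := nV_ge0 (sc t^-1 u + y).
  have [tp|tn] := ltP 0 t.
    have := alpha_hi Aw; rewrite gtr0_norm //.
    set P := p _ => h.
    have : t * alpha <= t * (P - t^-1 * r) by rewrite ler_pM2l.
    rewrite mulrBr mulrA tt mul1r; lra.
  have tn' : t < 0 by rewrite lt_neqAle tn0 tn.
  have Aw' := G3 (-1) Aw.
  rewrite scN1 mulN1r in Aw'.
  have := alpha_lo Aw'.
  have -> : - sc t^-1 u - y = - (sc t^-1 u + y) by rewrite opprD.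
  rewrite nV_N ltr0_norm //.
  set P := p _ => h.
  have : t * alpha <= t * (- (t^-1 * r) - P).
    by rewrite ler_nM2l.
  rewrite mulrBr mulrN mulrA tt mul1r; lra.
- move=> _; exists x0, (p x0), 0; split; first exact: G5.
  by rewrite sc0 addr0 mul0r addr0.
Qed.

Lemma A_sub_A' : (A `<` A')%classic.
Proof.
rewrite /proper; split.
  move=> [u r] Au; exists u, r, 0; split => //.
  by rewrite sc0 addr0 mul0r addr0.
move=> h; apply: (ny (r := 0 + 1 * alpha)); apply: h.
exists 0, 0, 1; split; first exact: A00.
by rewrite sc1 !add0r.
Qed.

End Ext.


Lemma real_HB : exists g : X -> R,
  [/\ forall u v, g (u + v) = g u + g v, forall t u, g (sc t u) = t * g u,
      forall u, g u <= p u & g x0 = p x0].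
Proof.
have [A [gA Amax]] := Zorn_bigcup good_chain.
have neA : exists z, A z.
  apply: contrapT => hne; apply: (Amax G0) good_G0; split.
    by move=> z Az; exfalso; apply: hne; exists z.
  move=> h; apply: hne; exists (sc 1 x0, 1 * p x0); apply: h; by exists 1.
have dom : forall u, exists r, A (u, r).
  move=> u; apply: contrapT => h.
  have ny : forall r, ~ A (u, r) by move=> r Ar; apply: h; exists r.
  exact: (Amax _ (A_sub_A' gA neA ny) (good_A' gA neA ny)).
have [g hg] := choice dom.
case: gA => G1 G2 G3 G4 G5.
exists g; split.
- by move=> u v; apply: G1 (hg (u + v)) (G2 _ _ _ _ (hg u) (hg v)).
- by move=> t u; apply: G1 (hg (sc t u)) (G3 _ _ t (hg u)).
- by move=> u; apply: G4 (hg u).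
- by apply: G1 (hg x0) (G5 neA).
Qed.

Lemma complex_HB : exists f : X -> K,
  [/\ forall u v, f (u + v) = f u + f v, forall (k : K) u, f (k *: u) = k * f u,
      forall u, nV (f u : K^o) <= 2 * p u & f x0 != 0].
Proof.
have [g [gD gS gle gx]] := real_HB.
have gN u : g (- u) = - g u by rewrite -scN1 gS mulN1r.
have gabs u : `|g u| <= p u.
  rewrite ler_norml gle andbT; have := gle (- u); rewrite gN nV_N; lra.
have ii : 'i * 'i = -1 :> K by rewrite -expr2 sqr_i.
pose f u := (g u)%:C - 'i * (g ('i *: u))%:C.
have fD u v : f (u + v) = f u + f v.
  by rewrite /f scalerDr !gD !rmorphD /=; ring.
have fR t u : f (sc t u) = t%:C * f u.
  rewrite /f gS; have -> : 'i *: sc t u = sc t ('i *: u) by rewrite /sc !scalerA mulrC.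
  rewrite gS !rmorphM /=; ring.
have fI u : f ('i *: u) = 'i * f u.
  rewrite /f scalerA ii scaleN1r gN rmorphN /=.
  rewrite mulrBr mulrA ii; ring.
exists f; split => //.
- move=> k u.
  have -> : k *: u = sc (complex.Re k) u + sc (complex.Im k) ('i *: u).
    by rewrite /sc scalerA {1}(complexE k) scalerDl [_ * 'i]mulrC.
  rewrite fD fR fR fI.
  rewrite [in RHS](complexE k) mulrDl; congr (_ + _); by rewrite mulrA [X in X * _]mulrC.
- move=> u; rewrite /f.
  apply: (le_trans (nV_D _ _)); rewrite nV_N nV_M nK_i mul1r !nK_real.
  have := gabs u; have := gabs ('i *: u); rewrite nV_Z nK_i mul1r; lra.
- apply/eqP => h.
  have : complex.Re (f x0) = p x0.
    by rewrite /f raddfB /= mul0r mulr0 subrr subr0 gx.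
  rewrite h /= => /esym /nV_eq0 /eqP; by rewrite (negbTE hx0).
Qed.

End HahnBanach.
Section BilSpace.
Variable R : realType.
Local Notation K := R[i].
Variables (C B : normedModType K) (W : completeNormedModType K).

Record bil := Bil {
  bf : C -> B -> W;
  bfD1 : forall c1 c2 b, bf (c1 + c2) b = bf c1 b + bf c2 b;
  bfZ1 : forall (k : K) c b, bf (k *: c) b = k *: bf c b;
  bfD2 : forall c b1 b2, bf c (b1 + b2) = bf c b1 + bf c b2;
  bfZ2 : forall (k : K) c b, bf c (k *: b) = k *: bf c b;
  bfB : exists M : R, forall c b, nV (bf c b) <= M * nV c * nV b }.

Lemma bil_eq (x y : bil) : bf x = bf y -> x = y.
Proof.
case: x => f1 a1 b1 c1 d1 e1; case: y => f2 a2 b2 c2 d2 e2 /= e; subst f2.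
by congr Bil; apply: Prop_irrelevance.
Qed.

HB.instance Definition _ := gen_eqMixin bil.
HB.instance Definition _ := gen_choiceMixin bil.

Lemma nVw_ge0 (c : C) (b : B) : 0 <= nV c * nV b.
Proof. by rewrite mulr_ge0 // nV_ge0. Qed.

Definition bil0 : bil.
Proof.
refine (@Bil (fun _ _ => 0) _ _ _ _ _).
- by move=> *; rewrite addr0.
- by move=> *; rewrite scaler0.
- by move=> *; rewrite addr0.
- by move=> *; rewrite scaler0.
- by exists 0 => c b; rewrite nV_0 !mul0r.
Defined.

Definition biladd (x y : bil) : bil.
Proof.
refine (@Bil (fun c b => bf x c b + bf y c b) _ _ _ _ _).
- by move=> *; rewrite !bfD1 addrACA.
- by move=> *; rewrite !bfZ1 scalerDr.
- by move=> *; rewrite !bfD2 addrACA.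
- by move=> *; rewrite !bfZ2 scalerDr.
- case: (bfB x) => M1 h1; case: (bfB y) => M2 h2; exists (M1 + M2) => c b.
  apply: (le_trans (nV_D _ _)); rewrite !mulrDl -mulrA -(mulrA M2).
  by apply: lerD; rewrite mulrA.
Defined.

Definition bilopp (x : bil) : bil.
Proof.
refine (@Bil (fun c b => - bf x c b) _ _ _ _ _).
- by move=> *; rewrite !bfD1 opprD.
- by move=> *; rewrite !bfZ1 scalerN.
- by move=> *; rewrite !bfD2 opprD.
- by move=> *; rewrite !bfZ2 scalerN.
- case: (bfB x) => M1 h1; exists M1 => c b; by rewrite nV_N.
Defined.

Definition bilscale (k : K) (x : bil) : bil.
Proof.
refine (@Bil (fun c b => k *: bf x c b) _ _ _ _ _).
- by move=> *; rewrite !bfD1 scalerDr.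
- by move=> *; rewrite !bfZ1 !scalerA mulrC.
- by move=> *; rewrite !bfD2 scalerDr.
- by move=> *; rewrite !bfZ2 !scalerA mulrC.
- case: (bfB x) => M1 h1; exists (nV (k : K^o) * M1) => c b.
  rewrite nV_Z -!mulrA; apply: ler_wpM2l; first exact: nV_ge0.
  by rewrite !mulrA.
Defined.

Lemma biladdA : associative biladd.
Proof. by move=> x y z; apply: bil_eq; apply: funext => c; apply: funext => b /=; rewrite addrA. Qed.
Lemma biladdC : commutative biladd.
Proof. by move=> x y; apply: bil_eq; apply: funext => c; apply: funext => b /=; rewrite addrC. Qed.
Lemma biladd0 : left_id bil0 biladd.
Proof. by move=> x; apply: bil_eq; apply: funext => c; apply: funext => b /=; rewrite add0r. Qed.
Lemma biladdN : left_inverse bil0 bilopp biladd.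
Proof. by move=> x; apply: bil_eq; apply: funext => c; apply: funext => b /=; rewrite addNr. Qed.

HB.instance Definition _ := GRing.isZmodule.Build bil biladdA biladdC biladd0 biladdN.

Lemma bilscaleA a b v : bilscale a (bilscale b v) = bilscale (a * b) v.
Proof. by apply: bil_eq; apply: funext => c; apply: funext => d /=; rewrite scalerA. Qed.
Lemma bilscale1 : left_id 1 bilscale.
Proof. by move=> x; apply: bil_eq; apply: funext => c; apply: funext => d /=; rewrite scale1r. Qed.
Lemma bilscaleDr : right_distributive bilscale +%R.
Proof. by move=> a x y; apply: bil_eq; apply: funext => c; apply: funext => d /=; rewrite scalerDr. Qed.
Lemma bilscaleDl v : {morph bilscale^~ v: a b / a + b}.
Proof. by move=> a b; apply: bil_eq; apply: funext => c; apply: funext => d /=; rewrite scalerDl. Qed.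

HB.instance Definition _ := GRing.Zmodule_isLmodule.Build K bil
  bilscaleA bilscale1 bilscaleDr bilscaleDl.

Lemma bf_add (x y : bil) c b : bf (x + y) c b = bf x c b + bf y c b.
Proof. by []. Qed.
Lemma bf_opp (x : bil) c b : bf (- x) c b = - bf x c b.
Proof. by []. Qed.
Lemma bf_scale k (x : bil) c b : bf (k *: x) c b = k *: bf x c b.
Proof. by []. Qed.
Lemma bf_zero c b : bf 0 c b = 0.
Proof. by []. Qed.

Definition bset (x : bil) : set R :=
  [set M | 0 <= M /\ forall c b, nV (bf x c b) <= M * nV c * nV b].

Definition nr (x : bil) : R := inf (bset x).

Lemma bset_n0 x : (bset x !=set0)%classic.
Proof.
case: (bfB x) => M h; exists `|M|; split => // c b.
apply: (le_trans (h c b)); rewrite -!mulrA; apply: ler_wpM2r.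
  exact: nVw_ge0.
exact: ler_norm.
Qed.

Lemma nr_ge0 x : 0 <= nr x.
Proof. by apply: lb_le_inf; [exact: bset_n0 | move=> M []]. Qed.

Lemma nr_le x M : 0 <= M -> (forall c b, nV (bf x c b) <= M * nV c * nV b) -> nr x <= M.
Proof. by move=> h0 h; apply: ge_inf; [exists 0 => m [] | split]. Qed.

Lemma nr_bound x c b : nV (bf x c b) <= nr x * nV c * nV b.
Proof.
rewrite -mulrA; set w := nV c * nV b; set v := nV (bf x c b).
have w0 : 0 <= w by exact: nVw_ge0.
rewrite leNgt; apply/negP => hlt.
have [M [M0 hM]] := bset_n0 x.
have hv : v <= M * w by rewrite /w mulrA; exact: hM.
have wp : 0 < w.
  rewrite lt_neqAle w0 andbT; apply/negP => /eqP w0'.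
  by move: hlt hv; rewrite -w0' !mulr0 => /lt_le_trans h /h; rewrite ltxx.
have : v / w <= nr x.
  apply: lb_le_inf; first exact: bset_n0.
  move=> M' hb; have [_ hM'] := hb; rewrite ler_pdivrMr //.
  by have := hM' c b; rewrite -mulrA.
by rewrite ler_pdivrMr // => /(lt_le_trans hlt); rewrite ltxx.
Qed.


Lemma nr_D x y : nr (x + y) <= nr x + nr y.
Proof.
apply: nr_le; first by rewrite addr_ge0 // nr_ge0.
move=> c b; rewrite bf_add; apply: le_trans (nV_D _ _) _; rewrite !mulrDl.
by apply: lerD; exact: nr_bound.
Qed.

Lemma nr_Zle k x : nr (k *: x) <= nV (k : K^o) * nr x.
Proof.
apply: nr_le; first by rewrite mulr_ge0 // ?nV_ge0 ?nr_ge0.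
move=> c b; rewrite bf_scale nV_Z -!mulrA; apply: ler_wpM2l; first exact: nV_ge0.
by rewrite !mulrA; exact: nr_bound.
Qed.

Lemma nV1 : nV (1 : K^o) = 1.
Proof. by rewrite /nV normr1. Qed.

Lemma nr_Z k x : nr (k *: x) = nV (k : K^o) * nr x.
Proof.
apply/le_anti/andP; split; first exact: nr_Zle.
have [->|k0] := eqVneq k 0.
  by rewrite nV_0 mul0r nr_ge0.
have e : x = k^-1 *: (k *: x) by rewrite scalerA mulVf // scale1r.
have h := nr_Zle k^-1 (k *: x); rewrite -e in h.
have e1 : nV (k : K^o) * nV (k^-1 : K^o) = 1 by rewrite -nV_M mulfV // nV1.
have := ler_wpM2l (nV_ge0 (k : K^o)) h.
by rewrite mulrA e1 mul1r.
Qed.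

Lemma nr_eq0 x : nr x = 0 -> x = 0.
Proof.
move=> h; apply: bil_eq; apply: funext => c; apply: funext => b.
apply: nV_eq0; apply/le_anti/andP; split; last exact: nV_ge0.
by have := nr_bound x c b; rewrite h !mul0r.
Qed.

Lemma nrC_D x y : (nr (x + y))%:C <= (nr x)%:C + (nr y)%:C.
Proof. by rewrite -rmorphD lecR nr_D. Qed.
Lemma nrC_Z (l : K) x : (nr (l *: x))%:C = `|l| * (nr x)%:C.
Proof. by rewrite nr_Z rmorphM nKE. Qed.
Lemma nrC_eq0 x : (nr x)%:C = 0 -> x = 0.
Proof. by move=> [h]; exact: nr_eq0. Qed.

HB.instance Definition _ := Lmodule_isNormed.Build K bil nrC_D nrC_Z nrC_eq0.

Lemma bil_normE (x : bil) : `|x| = (nr x)%:C.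
Proof. by []. Qed.

Lemma bil_nV (x : bil) : nV x = nr x.
Proof. by rewrite /nV bil_normE. Qed.

Local Open Scope classical_set_scope.

Lemma nr_sym (x y : bil) : nr (x - y) = nr (y - x).
Proof. by rewrite -!bil_nV nV_B. Qed.

Lemma ball_bil (x y : bil) (r : R) : ball x r%:C y <-> nr (x - y) < r.
Proof.
rewrite -ball_normE /ball_; change ((nr (x - y))%:C < r%:C <-> nr (x - y) < r).
by rewrite ltcR.
Qed.

Lemma posK (eps : K) : 0 < eps -> exists2 r : R, 0 < r & eps = r%:C.
Proof.
move=> h; exists (complex.Re eps); last exact/nonneg_realC/ltW.
by rewrite -ltcR -nonneg_realC // ltW.
Qed.

Lemma bil_complete (F : set_system bil) : ProperFilter F -> cauchy F -> cvg F.
Proof.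
move=> FF /(cauchyP F) Fc.
have Fc' : forall r : R, 0 < r -> exists x : bil, F [set y : bil | nr (x - y) < r]%classic.
  move=> r r0; have rC : 0 < r%:C by rewrite ltcR.
  have [x hx] := Fc _ rC.
  by exists x; apply: filterS hx => y /ball_bil.
pose G (c : C) (b : B) := (fun y : bil => bf y c b) @ F.
have Gc : forall c b, cauchy (G c b).
  move=> c b; apply/cauchyP => eps /posK [r r0 ->].
  set w := nV c * nV b.
  have w0 : 0 <= w by exact: nVw_ge0.
  have e0 : 0 < r / (w + 1) by rewrite divr_gt0 // ltr_wpDl.
  have [x hx] := Fc' _ e0; exists (bf x c b).
  suff : F [set y : bil | ball (bf x c b) r%:C (bf y c b)] by [].
  apply: filterS hx => y /= hy.
  rewrite -ball_normE /ball_ /= normE ltcR.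
  apply: (le_lt_trans (nr_bound (x - y) c b)); rewrite -mulrA -/w.
  apply: (le_lt_trans (ler_wpM2r w0 (ltW hy))).
  by rewrite mulrAC ltr_pdivrMr ?ltr_wpDl // mulrDr mulr1 ltrDl.
pose l c b := lim (G c b).
have cvgG : forall c b, G c b --> l c b by move=> c b; exact: cauchy_cvg.
have closed_l : forall c b (a : W) (r : R),
    F [set y : bil | nV (bf y c b - a) <= r]%classic -> nV (l c b - a) <= r.
  move=> c b a r hF; rewrite leNgt; apply/negP => hlt.
  have d0 : 0 < nV (l c b - a) - r by rewrite subr_gt0.
  have dC : 0 < (nV (l c b - a) - r)%:C by rewrite ltcR.
  have := cvgG c b; move=> /cvgrPdist_lt /(_ _ dC) h2.
  have [y [h3 h4]] := filter_ex (filterI hF h2).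
  move: h3 h4 => /= h3; rewrite normE ltcR => h4.
  have := nV_D (l c b - bf y c b) (bf y c b - a); rewrite addrA subrK; lra.
have lD1 : forall c1 c2 b, l (c1 + c2) b = l c1 b + l c2 b.
  move=> c1 c2 b; rewrite /l; apply: (cvg_lim (@norm_hausdorff _ W)).
  have e : (fun y : bil => bf y (c1 + c2) b) = (fun y => bf y c1 b + bf y c2 b).
    by apply: funext => y; rewrite bfD1.
  rewrite /G e; exact: cvgD (cvgG c1 b) (cvgG c2 b).
have lD2 : forall c b1 b2, l c (b1 + b2) = l c b1 + l c b2.
  move=> c b1 b2; rewrite /l; apply: (cvg_lim (@norm_hausdorff _ W)).
  have e : (fun y : bil => bf y c (b1 + b2)) = (fun y => bf y c b1 + bf y c b2).
    by apply: funext => y; rewrite bfD2.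
  rewrite /G e; exact: cvgD (cvgG c b1) (cvgG c b2).
have lZ1 : forall (k : K) c b, l (k *: c) b = k *: l c b.
  move=> k c b; rewrite /l; apply: (cvg_lim (@norm_hausdorff _ W)).
  have e : (fun y : bil => bf y (k *: c) b) = (fun y => k *: bf y c b).
    by apply: funext => y; rewrite bfZ1.
  rewrite /G e; exact: cvgZr (cvgG c b).
have lZ2 : forall (k : K) c b, l c (k *: b) = k *: l c b.
  move=> k c b; rewrite /l; apply: (cvg_lim (@norm_hausdorff _ W)).
  have e : (fun y : bil => bf y c (k *: b)) = (fun y => k *: bf y c b).
    by apply: funext => y; rewrite bfZ2.
  rewrite /G e; exact: cvgZr (cvgG c b).
have lB : exists M : R, forall c b, nV (l c b) <= M * nV c * nV b.
  have [x1 hx1] := Fc' _ ltr01.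
  exists (nr x1 + 1) => c b.
  have w0 := nVw_ge0 c b.
  have h : nV (l c b - bf x1 c b) <= nV c * nV b.
    apply: closed_l; apply: filterS hx1 => y /= hy.
    change (nV (bf (y - x1) c b) <= nV c * nV b).
    apply: (le_trans (nr_bound _ c b)); rewrite -mulrA.
    rewrite -[X in _ <= X]mul1r; apply: ler_wpM2r => //.
    by rewrite nr_sym ltW.
  have h2 := nr_bound x1 c b.
  have := nV_D (l c b - bf x1 c b) (bf x1 c b); rewrite subrK.
  rewrite -mulrA in h2; rewrite -mulrA mulrDl mul1r; lra.
pose lX := Bil lD1 lZ1 lD2 lZ2 lB.
apply/cvg_ex; exists lX.
apply/cvgrPdist_le => eps /posK [r r0 ->].
have r2 : 0 < r / 2 by rewrite divr_gt0.
have [x1 hx1] := Fc' _ r2.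
apply: filterS (hx1) => x /= hx.
change ((nr (lX - x))%:C <= r%:C); rewrite lecR.
apply: nr_le; first exact: ltW.
move=> c b; rewrite -mulrA.
change (nV (l c b - bf x c b) <= r * (nV c * nV b)).
have w0 := nVw_ge0 c b.
apply: closed_l; apply: filterS hx1 => y /= hy.
change (nV (bf (y - x) c b) <= r * (nV c * nV b)).
apply: (le_trans (nr_bound _ c b)); rewrite -mulrA.
apply: ler_wpM2r => //.
have -> : y - x = (y - x1) + (x1 - x) by rewrite addrA subrK.
apply: (le_trans (nr_D _ _)); rewrite nr_sym; lra.
Qed.

HB.instance Definition _ := Uniform_isComplete.Build bil bil_complete.
End BilSpace.

Section Acts.
Variable R : realType.
Local Notation K := R[i].
Variables (C B : completeNormedModType K).
Variables (mulB : B -> B -> B) (oneB : B) (hB : unital_banach_algebra mulB oneB).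
Variables (mulC : C -> C -> C) (oneC : C).
Hypothesis (hC : unital_banach_algebra mulC oneC).
Local Notation X := (bil C B B).

Lemma nV_mul (V : completeNormedModType K) (m : V -> V -> V) (o : V)
  (h : unital_banach_algebra m o) u v : nV (m u v) <= nV u * nV v.
Proof. by have := ba_norm_mul h u v; rewrite !normE -rmorphM lecR. Qed.

Definition lactX (b' : B) (x : X) : X.
Proof.
refine (@Bil _ _ _ _ (fun c b => bf x c (mulB b b')) _ _ _ _ _).
- by move=> *; rewrite bfD1.
- by move=> *; rewrite bfZ1.
- by move=> *; rewrite (ba_mulDl hB) bfD2.
- by move=> *; rewrite (ba_mulZl hB) bfZ2.
- exists (nr x * nV b') => c b.
  apply: (le_trans (nr_bound x c _)).
  have h := nV_mul hB b b'.
  have h1 : 0 <= nr x * nV c by rewrite mulr_ge0 ?nr_ge0 ?nV_ge0.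
  have := ler_wpM2l h1 h.
  rewrite [nr x * nV b' * nV c]mulrAC -[nr x * nV c * nV b' * nV b]mulrA [nV b' * nV b]mulrC !mulrA //.
Defined.

Definition ractX (x : X) (c' : C) : X.
Proof.
refine (@Bil _ _ _ _ (fun c b => bf x (mulC c' c) b) _ _ _ _ _).
- by move=> *; rewrite (ba_mulDr hC) bfD1.
- by move=> *; rewrite (ba_mulZr hC) bfZ1.
- by move=> *; rewrite bfD2.
- by move=> *; rewrite bfZ2.
- exists (nr x * nV c') => c b.
  apply: (le_trans (nr_bound x _ b)).
  have h := nV_mul hC c' c.
  apply: ler_wpM2r; first exact: nV_ge0.
  rewrite -mulrA; apply: ler_wpM2l => //; exact: nr_ge0.
Defined.

Lemma bimodX : unital_banach_bimodule mulB oneB mulC oneC lactX ractX.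
Proof.
split.
- move=> b1 b2 x; apply: bil_eq; apply: funext => c; apply: funext => b /=.
  by rewrite (ba_mulDr hB) bfD2.
- by move=> b x y; apply: bil_eq.
- move=> k b1 x; apply: bil_eq; apply: funext => c; apply: funext => b /=.
  by rewrite (ba_mulZr hB) bfZ2.
- by move=> k b x; apply: bil_eq.
- by move=> x y c; apply: bil_eq.
- move=> x c1 c2; apply: bil_eq; apply: funext => c; apply: funext => b /=.
  by rewrite (ba_mulDl hC) bfD1.
- by move=> k x c; apply: bil_eq.
- move=> k x c1; apply: bil_eq; apply: funext => c; apply: funext => b /=.
  by rewrite (ba_mulZl hC) bfZ1.
- move=> b1 b2 x; apply: bil_eq; apply: funext => c; apply: funext => b /=.
  by rewrite (ba_mulA hB).
- move=> x c1 c2; apply: bil_eq; apply: funext => c; apply: funext => b /=.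
  by rewrite (ba_mulA hC).
- by move=> b x c; apply: bil_eq.
- move=> b' x c'; rewrite bil_normE !normE -!rmorphM lecR.
  apply: nr_le; first by rewrite !mulr_ge0 ?nV_ge0 ?nr_ge0.
  move=> c b /=.
  apply: (le_trans (nr_bound x _ _)).
  have h1 := nV_mul hC c' c; have h2 := nV_mul hB b b'.
  have := ler_pM (nr_ge0 x) (nV_ge0 _) (lexx (nr x)) h1 => h3.
  have := ler_pM (mulr_ge0 (nr_ge0 x) (nV_ge0 _)) (nV_ge0 _) h3 h2.
  move/le_trans; apply; rewrite bil_nV.
  have -> : nV b' * nr x * nV c' * nV c * nV b =
    nr x * (nV c' * nV c) * (nV b * nV b') by ring.
  by [].
- move=> x; apply: bil_eq; apply: funext => c; apply: funext => b /=.
  by rewrite (ba_mul1r hB).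
- move=> x; apply: bil_eq; apply: funext => c; apply: funext => b /=.
  by rewrite (ba_mul1l hC).
Qed.

End Acts.

Lemma cbound (R : realType) (V : normedModType R[i]) (v : V) (M : R[i]) (r : R) :
  0 <= r -> `|v| <= M * r%:C -> nV v <= nV (M : R[i]^o) * r.
Proof.
move=> r0 h; have h0 : 0 <= M * r%:C := le_trans (normr_ge0 _) h.
have e : M * r%:C = `|M| * r%:C.
  by rewrite -(ger0_norm h0) normrM (ger0_norm (x := r%:C)) // ler0c.
by rewrite e normE [`|M|]nKE -rmorphM lecR in h.
Qed.

Lemma cboundK (R : realType) (k M : R[i]) (r : R) :
  0 <= r -> `|k| <= M * r%:C -> nV (k : R[i]^o) <= nV (M : R[i]^o) * r.
Proof. exact: (cbound (V := R[i]^o)). Qed.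

Theorem lemma3p2 (R : realType)
  (A B C : completeNormedModType R[i])
  (mulA : A -> A -> A) (oneA : A)
  (mulB : B -> B -> B) (oneB : B)
  (mulC : C -> C -> C) (oneC : C)
  (hA : unital_banach_algebra mulA oneA)
  (hB : unital_banach_algebra mulB oneB)
  (hC : unital_banach_algebra mulC oneC)
  (phi : A -> B) (psi : A -> C)
  (hphi : is_alg_hom mulA mulB phi) (hpsi : is_alg_hom mulA mulC psi) :
  (forall (X : completeNormedModType R[i]) (lact : B -> X -> X) (ract : X -> C -> X),
     unital_banach_bimodule mulB oneB mulC oneC lact ract ->
     forall d : A -> X, is_linear d -> is_bounded d ->
       is_jordan_der mulA lact ract +%R phi psi d ->
       is_der mulA lact ract +%R phi psi d)
  <->
  (forall V : A -> C -> B -> R[i], is_bounded_trilinear V ->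
     (forall a c b, V (mulA a a) c b = V a (mulC (psi a) c) b + V a c (mulB b (phi a))) ->
     (forall a d c b, V (mulA a d) c b = V a (mulC (psi d) c) b + V d c (mulB b (phi a)))).
Proof.
split.
- move=> H1 V [VL1 [VL2 [VL3 [M VM]]]] VJ a e c b.
  have Vbnd : forall a' c' b', nV (V a' c' b' : R[i]^o) <=
      nV (M : R[i]^o) * (nV a' * (nV c' * nV b')).
    move=> a' c' b'; have := VM a' c' b'.
    rewrite [`|a'|]normE [`|c'|]normE [`|b'|]normE -!mulrA -!rmorphM.
    by apply: cboundK; rewrite !mulr_ge0 ?nV_ge0.
  have dD1 a' : forall c1 c2 b', V a' (c1 + c2) b' *: oneB =
      V a' c1 b' *: oneB + V a' c2 b' *: oneB.
    by move=> c1 c2 b'; rewrite (proj1 (VL2 a' b')) scalerDl.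
  have dZ1 a' : forall (k : R[i]) c' b', V a' (k *: c') b' *: oneB =
      k *: (V a' c' b' *: oneB).
    by move=> k c' b'; rewrite (proj2 (VL2 a' b')) scalerA.
  have dD2 a' : forall c' b1 b2, V a' c' (b1 + b2) *: oneB =
      V a' c' b1 *: oneB + V a' c' b2 *: oneB.
    by move=> c' b1 b2; rewrite (proj1 (VL3 a' c')) scalerDl.
  have dZ2 a' : forall (k : R[i]) c' b', V a' c' (k *: b') *: oneB =
      k *: (V a' c' b' *: oneB).
    by move=> k c' b'; rewrite (proj2 (VL3 a' c')) scalerA.
  have n1 : nV oneB = 1 by rewrite /nV (ba_norm_one hB).
  have dB a' : exists M0 : R, forall c' b',
      nV (V a' c' b' *: oneB) <= M0 * nV c' * nV b'.
    exists (nV (M : R[i]^o) * nV a') => c' b'; rewrite nV_Z n1 mulr1.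
    by rewrite -!mulrA; exact: Vbnd.
  pose dd (a' : A) : bil C B B := Bil (dD1 a') (dZ1 a') (dD2 a') (dZ2 a') (dB a').
  have dlin : is_linear dd.
    split.
      move=> u v; apply: bil_eq; apply: funext => c'; apply: funext => b' /=.
      by rewrite (proj1 (VL1 c' b')) scalerDl.
    move=> k u; apply: bil_eq; apply: funext => c'; apply: funext => b' /=.
    by rewrite (proj2 (VL1 c' b')) scalerA.
  have dbd : is_bounded dd.
    exists (nV (M : R[i]^o))%:C => u; rewrite bil_normE normE -rmorphM lecR.
    apply: nr_le; first by rewrite mulr_ge0 ?nV_ge0.
    move=> c' b' /=; rewrite nV_Z n1 mulr1.
    by rewrite -!mulrA; exact: Vbnd.
  have dJ : is_jordan_der mulA (lactX hB) (ractX hC) +%R phi psi dd.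
    move=> a'; apply: bil_eq; apply: funext => c'; apply: funext => b' /=.
    by rewrite VJ scalerDl addrC.
  have hd := H1 _ _ _ (bimodX hB hC) dd dlin dbd dJ a e.
  have := congr1 (fun x : bil C B B => bf x c b) hd => /= /eqP.
  rewrite -scalerDl -subr_eq0 -scalerBl scaler_eq0 subr_eq0 => /orP [/eqP //|].
  move=> /eqP o0; have := ba_norm_one hB; rewrite o0 normr0 => /eqP.
  by rewrite eq_sym oner_eq0.
- move=> H2 X lact ract hX d [dD dZ] [Md hMd] dJ a e /=.
  apply/eqP; rewrite -subr_eq0; apply: contraT => nz.
  have [f [fD fZ fb fz]] := complex_HB nz.
  have f0 : f 0 = 0.
    by have := fD 0 0; rewrite addr0 => h; apply: (addrI (f 0)); rewrite -h addr0.
  have fB u v : f (u - v) = f u - f v.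
    by apply/eqP; rewrite eq_sym subr_eq -fD subrK.
  have dbnd u : nV (d u) <= nV (Md : R[i]^o) * nV u.
    by apply: cbound; [exact: nV_ge0 | rewrite -normE; exact: hMd].
  pose V (a' : A) (c : C) (b : B) : R[i] := f (ract (lact b (d a')) c).
  have Vtri : is_bounded_trilinear V.
    split; [|split; [|split]].
    - move=> c b; split.
        by move=> u v; rewrite /V dD (bm_lactDr hX) (bm_ractDl hX) fD.
      by move=> k u; rewrite /V dZ (bm_lactZr hX) (bm_ractZl hX) fZ.
    - move=> a' b; split.
        by move=> u v; rewrite /V (bm_ractDr hX) fD.
      by move=> k u; rewrite /V (bm_ractZr hX) fZ.
    - move=> a' c; split.
        by move=> u v; rewrite /V (bm_lactDl hX) (bm_ractDl hX) fD.
      by move=> k u; rewrite /V (bm_lactZl hX) (bm_ractZl hX) fZ.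
    - exists (2 * nV (Md : R[i]^o))%:C => a' c b.
      rewrite [`|V a' c b|]nKE !normE -!rmorphM lecR.
      apply: (le_trans (fb _)).
      have h1 := bm_norm hX b (d a') c.
      rewrite !normE -!rmorphM lecR in h1.
      have h2 := dbnd a'.
      have hb := nV_ge0 b; have hc := nV_ge0 c; have hdd := nV_ge0 (d a').
      have hm := nV_ge0 (Md : R[i]^o); have ha := nV_ge0 a'.
      apply: (le_trans (ler_wpM2l _ h1)) => //.
      have h3 : nV b * nV (d a') * nV c <= nV b * (nV (Md : R[i]^o) * nV a') * nV c.
        by apply: ler_wpM2r => //; apply: ler_wpM2l.
      apply: (le_trans (ler_wpM2l _ h3)) => //.
      by rewrite le_eqVlt; apply/orP; left; apply/eqP; ring.
  have VJ : forall a c b, V (mulA a a) c b = V a (mulC (psi a) c) b + V a c (mulB b (phi a)).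
    move=> a' c b; rewrite /V dJ /= (bm_lactDr hX) (bm_ractDl hX) fD addrC.
    by rewrite (bm_lactA hX) -(bm_comm hX) (bm_ractA hX).
  have := H2 V Vtri VJ a e oneC oneB.
  rewrite /V (ba_mul1r hC) (ba_mul1l hB) !(bm_lact1 hX) !(bm_ract1 hX).
  move=> h; move: fz; rewrite fB fD h subrr => /eqP; by [].
Qed.
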